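(* Let $\{X_t\},\{Y_t\}$ ($t\in T$) be stochastic processes with finite second moments such that $X_t\le_{\textnormal{d-ast}}Y_t$ as $t\to\infty$. Let $\psi:\mathbb{R}\to\mathbb{R}$ be strictly increasing and Lipschitz continuous, with $\psi(X_t)$, $\psi(Y_t)$ having finite second moments for all $t$. If there exist $C>0$ and $t_0\in T$ with $\mathcal{W}_2^2(F_{X_t},F_{Y_t})\le C\,\mathcal{W}_2^2(F_{\psi(X_t)},F_{\psi(Y_t)})$ for all $t\ge t_0$, then $\psi(X_t)\le_{\textnormal{d-ast}}\psi(Y_t)$ as $t\to\infty$.
   Context: $T\subseteq\mathbb{R}$ is unbounded above; limits along $t\in T$. $F^{-1}(u)=\inf\{x:F(x)\ge u\}$. $\mathcal{W}_2(F,G)=(\int_0^1(F^{-1}-G^{-1})^2du)^{1/2}$. $\varepsilon_{\mathcal{W}_2}(F,G)=\mathcal{W}_2^{-2}(F,G)\int_{\{u\in(0,1):F^{-1}(u)>G^{-1}(u)\}}(F^{-1}-G^{-1})^2du$, set to $0$ if $\mathcal{W}_2(F,G)=0$. $X_t\le_{\textnormal{d-ast}}Y_t$ means $\lim_{t\to\infty}\varepsilon_{\mathcal{W}_2}(F_{X_t},F_{Y_t})=0$. *)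

(* Defs.v *)
From HB Require Import structures.
From mathcomp Require Import all_boot all_order all_algebra.
From mathcomp Require Import all_classical all_reals all_analysis.
Set Implicit Arguments. Unset Strict Implicit. Unset Printing Implicit Defensive.
Import Order.TTheory GRing.Theory Num.Theory.
Import numFieldNormedType.Exports.
Local Open Scope classical_set_scope.
Local Open Scope ring_scope.

Section Defs.
Context {R : realType}.

Definition distrF {d} {Omega : measurableType d} (P : probability Omega R)
  (X : Omega -> R) (x : R) : R := fine (P [set w | X w <= x]).

Definition qf (F : R -> R) (u : R) : R := inf [set x | u <= F x].

Definition W2sq (F G : R -> R) : \bar R :=
  (\int[@lebesgue_measure R]_(u in `]0%R, 1%R[) ((qf F u - qf G u) ^+ 2)%:E)%E.

Definition W2sq_pos (F G : R -> R) : \bar R :=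
  (\int[@lebesgue_measure R]_(u in `]0%R, 1%R[ `&` [set u | (qf G u < qf F u)%R])
      ((qf F u - qf G u) ^+ 2)%:E)%E.

Definition epsW2 (F G : R -> R) : R :=
  if W2sq F G == 0%E then 0 else fine (W2sq_pos F G) / fine (W2sq F G).

Definition dast {d} {Omega : measurableType d} (P : probability Omega R)
  (T : set R) (X Y : R -> Omega -> R) : Prop :=
  forall e : R, 0 < e -> exists M : R, forall t, T t -> M <= t ->
    `| epsW2 (distrF P (X t)) (distrF P (Y t)) | < e.

End Defs.

(* Main.v *)
Require Import Defs.
From HB Require Import structures.
From mathcomp Require Import all_boot all_order all_algebra.
From mathcomp Require Import all_classical all_reals all_analysis.
From mathcomp Require Import measurable_realfun.
From mathcomp Require Import ring lra.
Import Order.TTheory GRing.Theory Num.Theory.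
Import numFieldNormedType.Exports.
Local Open Scope classical_set_scope.
Local Open Scope ring_scope.
Section S.
Context {R : realType} {d : measure_display} {Omega : measurableType d}
  (P : probability Omega R) (X : Omega -> R) (mX : measurable_fun setT X).
Definition XR : {RV P >-> R} := HB.pack X (isMeasurableFun.Build _ _ _ _ X mX).
Lemma cdfE r : cdf XR r = P [set w | X w <= r].
Proof. rewrite /cdf /distribution /pushforward /=. by congr (P _). Qed.

Lemma distrFE r : distrF P X r = fine (cdf XR r).
Proof. by rewrite cdfE. Qed.

Lemma distrF_nd : {homo distrF P X : x y / x <= y}.
Proof.
move=> x y xy; rewrite !distrFE fine_le ?fin_num_measure//.
exact: cdf_nondecreasing.
Qed.

Lemma distrF_hi u : u < 1 -> exists x, u < distrF P X x.
Proof.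
move=> u1.
have /fine_cvgP[_ h] := cvg_cdfy1 XR.
have := cvgr_gt 1 h u u1.
case=> M [_ HM]; exists (M + 1); rewrite distrFE; apply: (HM (M+1)).
by rewrite ltrDl.
Qed.

Lemma distrF_lo u : 0 < u -> exists x, distrF P X x < u.
Proof.
move=> u0.
have /fine_cvgP[_ h] := cvg_cdfNy0 XR.
have := cvgr_lt 0 h u u0.
case=> M [_ HM]; exists (M - 1); rewrite distrFE; apply: (HM (M-1)).
by rewrite ltrBlDr ltrDl.
Qed.

Lemma mset (f : Omega -> R) (mf : measurable_fun setT f) a :
  measurable [set w | f w <= a].
Proof.
have := mf measurableT _ (measurable_itv `]-oo, a]).
by rewrite setTI.
Qed.

End S.

Section Q.
Context {R : realType} {d : measure_display} {Omega : measurableType d}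
  (P : probability Omega R) (X : Omega -> R) (mX : measurable_fun setT X)
  (psi : R -> R) (hpsi : {homo psi : x y / x < y}) (L : R)
  (hL : forall x y, `|psi x - psi y| <= L * `|x - y|).

Lemma psi_nd : {homo psi : x y / x <= y}.
Proof. by move=> x y; rewrite le_eqVlt => /orP[/eqP->//|/hpsi/ltW]. Qed.

Lemma psi_ltW x y : psi x < psi y -> x < y.
Proof. by move=> h; rewrite ltNge; apply/negP => /psi_nd; rewrite leNgt h. Qed.

Lemma L_gt0 : 0 < L.
Proof.
have h : psi 0 < psi 1 by apply: hpsi.
have := hL 1 0; rewrite subr0 normr1 mulr1 => /(lt_le_trans _); apply.
by rewrite gtr0_norm ?subr_gt0 // subr_gt0.
Qed.

Lemma mpsiX : measurable_fun setT (psi \o X).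
Proof. apply: measurableT_comp => //; exact: measurable_realfun.nondecreasing_measurable psi_nd. Qed.

Lemma psi_lip x y : x <= y -> psi y - psi x <= L * (y - x).
Proof.
move=> xy; have := hL y x; rewrite (ger0_norm (_ : 0 <= y - x)) ?subr_ge0 //.
by apply: le_trans; exact: ler_norm.
Qed.

Lemma qf_comp u : 0 < u -> u < 1 ->
  qf (distrF P (psi \o X)) u = psi (qf (distrF P X) u).
Proof.
move=> u0 u1.
set F := distrF P X. set G := distrF P (psi \o X).
rewrite /qf.
set A := [set x | u <= F x]. set B := [set y | u <= G y].
have hA : A !=set0.
  by have [x hx] := distrF_hi P X mX u u1; exists x; rewrite /A /= ltW.
have hlb : has_lbound A.
  have [x0 hx0] := distrF_lo P X mX u u0; exists x0 => a Aa.
  rewrite leNgt; apply/negP => ax0.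
  have := distrF_nd P X mX _ _ (ltW ax0); rewrite -/F => h.
  by move: Aa; rewrite /A /= leNgt (le_lt_trans h hx0).
set q := inf A.
have hq a : A a -> q <= a by move=> Aa; exact: ge_inf.
have step1 a : A a -> B (psi a).
  rewrite /A /B /= => Aa; apply: (le_trans Aa).
  rewrite /F /G /distrF; apply: fine_le; rewrite ?fin_num_measure //; try exact: mset mpsiX _.
  - exact: mset mX _.
  - apply: le_measure; rewrite ?inE; [exact: mset mX _|exact: mset mpsiX _|].
    by move=> w /=; apply: psi_nd.
have step2 y : B y -> psi q <= y.
  move=> By; rewrite leNgt; apply/negP => yq.
  set S := [set x | psi x <= y].
  have Sq x : S x -> x < q.
    move=> Sx; rewrite ltNge; apply/negP => /psi_nd qx.
    by move: yq; rewrite ltNge (le_trans qx Sx).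
  have [[x0 Sx0]|S0] := pselect (S !=set0); last first.
    have : G y = 0.
      rewrite /G /distrF (_ : [set w | _] = set0) ?measure0 //.
      by apply/seteqP; split => // w /= h; apply: S0; exists (X w).
    by move=> G0; move: By; rewrite /B /= G0 leNgt u0.
  have hsup : has_sup S by split; [exists x0|exists q => x /Sq/ltW].
  set s := sup S.
  have sS x : S x -> x <= s by move=> Sx; exact: sup_upper_bound.
  have sq : s <= q by apply: ge_sup; [exists x0|move=> x /Sq/ltW].
  have psy : psi s <= y.
    rewrite leNgt; apply/negP => ys.
    have e0 : 0 < (psi s - y) / L by rewrite divr_gt0 ?subr_gt0 ?L_gt0.
    have [x Sx hx] := sup_adherent e0 hsup.
    have := psi_lip _ _ (sS x Sx).
    have : L * (s - x) < psi s - y.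
      rewrite -(@ltr_pM2l _ (L^-1)) ?invr_gt0 ?L_gt0 // mulrA mulVf ?gt_eqF ?L_gt0 // mul1r.
      by rewrite mulrC ltrBlDr addrC -ltrBlDr.
    move=> h1 h2; have := le_lt_trans h2 h1.
    by rewrite ltrD2l ltrN2 ltNge Sx.
  have GF : G y = F s.
    rewrite /G /F /distrF; congr (fine (P _)); apply/seteqP; split => w /=.
    - by move=> h; apply: sS.
    - by move=> h; apply: le_trans psy; apply: psi_nd.
  have sq' : s < q.
    rewrite lt_neqAle sq andbT; apply/eqP => sq2.
    by move: yq; rewrite -sq2 ltNge psy.
  have Fs : F s < u.
    rewrite ltNge; apply/negP => Fs; have := hq s Fs.
    by rewrite leNgt sq'.
  by move: By; rewrite /B /= GF leNgt Fs.
have hB : B !=set0 by case: hA => a Aa; exists (psi a); exact: step1.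
have hlbB : has_lbound B by exists (psi q).
apply/eqP; rewrite eq_le; apply/andP; split; last first.
  by apply: lb_le_inf.
apply/ler_addgt0Pr => e e0.
have eL : 0 < e / L by rewrite divr_gt0 ?L_gt0.
have [a Aa ha] := inf_adherent eL (conj hA hlb).
apply: (le_trans (ge_inf hlbB (step1 a Aa))).
have := psi_lip _ _ (hq a Aa).
rewrite lerBlDl => h; apply: (le_trans h); rewrite lerD2l.
rewrite -(@ler_pM2l _ (L^-1)) ?invr_gt0 ?L_gt0 // mulrA mulVf ?gt_eqF ?L_gt0 // mul1r.
by rewrite mulrC ltW // ltrBlDl.
Qed.

End Q.
Lemma nd_on_measurable {R : realType} (f : R -> R) :
  {in `]0%R, 1%R[ &, {homo f : x y / x <= y}} -> measurable_fun (`]0%R, 1%R[ : set R) f.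
Proof.
move=> f_nd.
apply: (measurability (@measurable_realfun.RGenCInfty.G R)) => [|/= _ [_] [r] -> <-].
  exact: measurable_realfun.RGenCInfty.measurableE.
apply: measurable_realfun.is_interval_measurable => s t /=.
rewrite !in_itv /= !andbT => -[/andP[s0 s1] fs] [/andP[t0 t1] ft] z /andP[sz zt].
have z0 : 0 < z by apply: lt_le_trans sz.
have z1 : z < 1 by apply: le_lt_trans t1.
split; first by rewrite in_itv /= z0 z1.
rewrite in_itv /= andbT. apply: (le_trans fs); apply: f_nd => //; by rewrite in_itv /= ?s0 ?s1 ?z0 ?z1.
Qed.

Section K.
Context {R : realType} {d : measure_display} {Omega : measurableType d}
  (P : probability Omega R).

Lemma qfA {X : Omega -> R} (mX : measurable_fun setT X) {u} : 0 < u -> u < 1 ->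
  [set x | u <= distrF P X x] !=set0 /\ has_lbound [set x | u <= distrF P X x].
Proof.
move=> u0 u1; split.
  by have [x hx] := distrF_hi P X mX u u1; exists x; rewrite /= ltW.
have [x0 hx0] := distrF_lo P X mX u u0; exists x0 => a Aa.
rewrite leNgt; apply/negP => ax0.
have := distrF_nd P X mX _ _ (ltW ax0) => h.
by move: Aa; rewrite /= leNgt (le_lt_trans h hx0).
Qed.

Lemma qf_nd {X : Omega -> R} (mX : measurable_fun setT X) :
  {in `]0%R, 1%R[ &, {homo qf (distrF P X) : x y / x <= y}}.
Proof.
move=> u v; rewrite !in_itv /= => /andP[u0 u1] /andP[v0 v1] uv.
have [hAu hlu] := qfA mX u0 u1.
have [hAv hlv] := qfA mX v0 v1.
apply: lb_le_inf => // x /= vx; apply: ge_inf => //=.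
exact: le_trans vx.
Qed.

Lemma mqf {X : Omega -> R} (mX : measurable_fun setT X) :
  measurable_fun (`]0%R, 1%R[ : set R) (qf (distrF P X)).
Proof. exact: nd_on_measurable (qf_nd mX). Qed.

Local Open Scope ereal_scope.

Lemma key2 (X Y : Omega -> R) (mX : measurable_fun setT X) (mY : measurable_fun setT Y) :
  W2sq_pos (distrF P X) (distrF P Y) <= W2sq (distrF P X) (distrF P Y).
Proof.
rewrite /W2sq_pos /W2sq.
have mD : measurable (`]0%R, 1%R[ : set R) by exact: measurable_itv.
apply: ge0_subset_integral => //.
- have h := measurable_fun_ltr (mqf mY) (mqf mX) mD.
  exact: (h [set true]).
- apply/measurable_EFinP; apply: measurable_funX; apply: measurable_funB; exact: mqf.
- by move=> x _; rewrite lee_fin sqr_ge0.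
Qed.
End K.

Section K2.
Context {R : realType} {d : measure_display} {Omega : measurableType d}
  (P : probability Omega R).
Local Open Scope ereal_scope.

Lemma key (X Y : Omega -> R) (mX : measurable_fun setT X) (mY : measurable_fun setT Y)
  (psi : R -> R) (hpsi : {homo psi : x y / (x < y)%R}) (L : R)
  (hL : forall x y, (`|psi x - psi y| <= L * `|x - y|)%R) :
  W2sq_pos (distrF P (psi \o X)) (distrF P (psi \o Y))
  <= (L ^+ 2)%:E * W2sq_pos (distrF P X) (distrF P Y).
Proof.
rewrite /W2sq_pos.
have mD : measurable (`]0%R, 1%R[ : set R) by exact: measurable_itv.
set qX := qf (distrF P X). set qY := qf (distrF P Y).
have cX u : (0 < u < 1)%R -> qf (distrF P (psi \o X)) u = psi (qX u).
  by case/andP => u0 u1; exact: (qf_comp P X mX psi hpsi L hL u u0 u1).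
have cY u : (0 < u < 1)%R -> qf (distrF P (psi \o Y)) u = psi (qY u).
  by case/andP => u0 u1; exact: (qf_comp P Y mY psi hpsi L hL u u0 u1).
have eqS : `]0%R, 1%R[ `&` [set u | (qf (distrF P (psi \o Y)) u < qf (distrF P (psi \o X)) u)%R]
   = `]0%R, 1%R[ `&` [set u | (qY u < qX u)%R].
  apply/seteqP; split => u [Du h]; split => //; move: h Du => /=;
    rewrite in_itv /= => + u01; rewrite (cX _ u01) (cY _ u01).
    exact: psi_ltW.
  exact: hpsi.
rewrite eqS.
have -> : \int[lebesgue_measure]_(u in `]0%R, 1%R[ `&` [set u | (qY u < qX u)%R])
     ((qf (distrF P (psi \o X)) u - qf (distrF P (psi \o Y)) u) ^+ 2)%:E
   = \int[lebesgue_measure]_(u in `]0%R, 1%R[ `&` [set u | (qY u < qX u)%R])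
     ((psi (qX u) - psi (qY u)) ^+ 2)%:E.
  apply: eq_integral => u; rewrite inE => -[Du _]; move: Du; rewrite /= in_itv /= => u01.
  by rewrite (cX _ u01) (cY _ u01).
have mS : measurable (`]0%R, 1%R[ `&` [set u | (qY u < qX u)%R]).
  have h := measurable_fun_ltr (mqf P mY) (mqf P mX) mD.
  exact: (h [set true]).
have mqX : measurable_fun (`]0%R, 1%R[ `&` [set u | (qY u < qX u)%R]) qX.
  exact: measurable_funS (mqf P mX).
have mqY : measurable_fun (`]0%R, 1%R[ `&` [set u | (qY u < qX u)%R]) qY.
  exact: measurable_funS (mqf P mY).
rewrite -ge0_integralZl_EFin //; try exact: sqr_ge0;
  try (by move=> x _; rewrite lee_fin sqr_ge0);
  try (by apply/measurable_EFinP; apply: measurable_funX; exact: measurable_funB).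
apply: ge0_le_integral => //.
- by move=> x _; rewrite lee_fin sqr_ge0.
- apply/measurable_EFinP; apply: measurable_funX; apply: measurable_funB;
    apply: measurableT_comp => //; exact: (measurable_realfun.nondecreasing_measurable measurableT (psi_nd psi hpsi)).
- apply: emeasurable_funM; first exact: measurable_cst.
  apply/measurable_EFinP; apply: measurable_funX; exact: measurable_funB.
- move=> x _; rewrite -EFinM lee_fin.
  have h := hL (qX x) (qY x).
  have h0 : (0 <= `|psi (qX x) - psi (qY x)|)%R by [].
  rewrite -(real_normK (num_real (psi (qX x) - psi (qY x)))).
  rewrite -(real_normK (num_real (qX x - qY x))) -exprMn.
  apply: lerXn2r => //; rewrite nnegrE //.
  by apply: le_trans h.
Qed.
End K2.

Lemma noinf {R : realType} {x : R} : (+oo <= x%:E)%E -> False.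
Proof. by rewrite leNgt ltry. Qed.

Lemma final_alg {R : realType} (Wx Wp px pp : \bar R) (L2 C e : R) :
  (0 <= px)%E -> (0 <= pp)%E -> (0 <= Wp)%E ->
  (pp <= L2%:E * px)%E -> (px <= Wx)%E -> (Wx <= C%:E * Wp)%E ->
  0 <= L2 -> 0 < C -> 0 < e ->
  `|(if Wx == 0%E then 0 else fine px / fine Wx)| < e / (L2 * C + 1) ->
  `|(if Wp == 0%E then 0 else fine pp / fine Wp)| < e.
Proof.
move=> px0 pp0 Wp0 h1 h2 h3 L20 C0 e0 hX.
case: ifP => [_|Wpn0]; first by rewrite normr0.
move: Wp Wp0 Wpn0 h3 => [wp| |] //=; last by rewrite invr0 mulr0 normr0.
rewrite lee_fin => wp0 wpn0 h3.
have wpp : 0 < wp by rewrite lt_neqAle wp0 andbT eq_sym; apply/negP => /eqP h; move: wpn0; rewrite h eqxx.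
move: px px0 h1 h2 hX => [a| |] //; last first.
  by move=> _ _ h2; have := le_trans h2 h3; rewrite -EFinM => hh; case: (noinf hh).
rewrite lee_fin => a0 h1 h2.
move: pp pp0 h1 => [b| |] //; try by rewrite -EFinM => _ hh; case: (noinf hh).
rewrite lee_fin -EFinM lee_fin => b0 h1.
move: Wx h2 h3 => [wx| |] //; try by rewrite -EFinM => _ hh; case: (noinf hh).
rewrite -EFinM !lee_fin => h2 h3 /=.
have [wx0|wxn0] := eqVneq wx 0.
  have a00 : a = 0 by apply/eqP; rewrite eq_le a0 andbT -wx0.
  have b00 : b = 0 by apply/eqP; rewrite eq_le b0 andbT; move: h1; rewrite a00 mulr0.
  by rewrite b00 mul0r normr0.
have wxp : 0 < wx by rewrite lt_neqAle eq_sym wxn0 (le_trans a0 h2).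
have -> : (wx%:E == 0%E) = false by rewrite eqe; exact/negbTE.
rewrite ger0_norm ?divr_ge0 ?(ltW wxp) // => hX.
rewrite ger0_norm ?divr_ge0 ?(ltW wpp) //.
have K1 : 0 < L2 * C + 1 by rewrite ltr_wpDl ?mulr_ge0 ?(ltW C0).
move: hX; rewrite ltr_pdivrMr // => hX.
rewrite ltr_pdivrMr //.
set e' := e / (L2 * C + 1) in hX.
have ee : e = e' * (L2 * C + 1) by rewrite /e' divfK // gt_eqF.
rewrite ee.
have s1 : b <= L2 * (e' * wx).
  apply: (le_trans h1); apply: ler_wpM2l => //; exact: ltW.
have s2 : L2 * (e' * wx) <= L2 * (e' * (C * wp)).
  apply: ler_wpM2l => //; apply: ler_wpM2l => //.
  by rewrite /e' divr_ge0 ?(ltW e0) ?(ltW K1).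
have e'0 : 0 < e' by rewrite /e' divr_gt0.
apply: (le_lt_trans (le_trans s1 s2)).
have : 0 < e' * wp by rewrite mulr_gt0.
move=> h. rewrite -(subr_gt0) . 
have -> : e' * (L2 * C + 1) * wp - L2 * (e' * (C * wp)) = e' * wp by ring.
exact: h.
Qed.

Theorem theorem2p6 (R : realType) (d : measure_display) (Omega : measurableType d)
  (P : probability Omega R) (T : set R) (X Y : R -> Omega -> R) (psi : R -> R) :
  (forall M : R, exists t, T t /\ M < t) ->
  (forall t, T t -> measurable_fun setT (X t) /\ measurable_fun setT (Y t)) ->
  (forall t, T t -> P.-integrable setT (fun w => ((X t w) ^+ 2)%:E) /\
                    P.-integrable setT (fun w => ((Y t w) ^+ 2)%:E)) ->
  dast P T X Y ->
  {homo psi : x y / x < y} ->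
  (exists L : R, forall x y, `|psi x - psi y| <= L * `|x - y|) ->
  (forall t, T t -> P.-integrable setT (fun w => ((psi (X t w)) ^+ 2)%:E) /\
                    P.-integrable setT (fun w => ((psi (Y t w)) ^+ 2)%:E)) ->
  (exists C : R, 0 < C /\ exists t0, T t0 /\ forall t, T t -> t0 <= t ->
     (W2sq (distrF P (X t)) (distrF P (Y t))
      <= C%:E * W2sq (distrF P (psi \o X t)) (distrF P (psi \o Y t)))%E) ->
  dast P T (fun t => psi \o X t) (fun t => psi \o Y t).
Proof.
move=> hT hmeas hint hdast hpsi [L hL] hint2 [C [C0 [t0 [Tt0 hC]]]].
rewrite /dast => e e0.
have L20 : 0 <= L ^+ 2 := sqr_ge0 L.
have K1 : 0 < L ^+ 2 * C + 1.
  apply: ltr_wpDl => //; apply: mulr_ge0 => //; exact: ltW.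

have [M hM] := hdast (e / (L ^+ 2 * C + 1)) (divr_gt0 e0 K1).
exists (Num.max M t0) => t Tt; rewrite ge_max => /andP[Mt t0t].

have [mX mY] := hmeas t Tt.
have hX := hM t Tt Mt.
rewrite /epsW2 in hX *.
apply: (final_alg _ _ _ _ _ _ _ _ _ _ _ _ _ L20 C0 e0 hX).
- by apply: integral_ge0 => x _; rewrite lee_fin sqr_ge0.
- by apply: integral_ge0 => x _; rewrite lee_fin sqr_ge0.
- by apply: integral_ge0 => x _; rewrite lee_fin sqr_ge0.
- exact: (key P (X t) (Y t) mX mY psi hpsi L hL).
- exact: (key2 P (X t) (Y t) mX mY).
- exact: hC.
Qed.
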